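(* For every integer $k\ge1$: (1) for every $(T,\mu)\in\mathcal M_k$, the root has at least one $1$-marked neighbor; (2) for every $(T,\mu)\in\mathcal M_k$ and every vertex $u$ of $T$, if $\mu(u)=1$ then $u$ is a leaf; (3) if $k\ge2$, each marked tree in $\mathcal M_k$ is obtained (by one of the two operations below) from exactly one marked tree in $\mathcal M_{k-1}$; (4) $|\mathcal M_k|=2^{k-1}$.
   Context: A marked tree is a pair $(T,\mu)$ with $T$ a rooted tree and $\mu:V(T)\to\{0,1\}$; marked trees are identified up to isomorphism of rooted marked trees. Define $\mathcal M_k$ (marked trees with $k$ edges) inductively: $\mathcal M_1=\{(T_1,\mu_1)\}$ where $T_1$ is a single edge, the root $v$ has $\mu_1(v)=0$ and its neighbor $u$ has $\mu_1(u)=1$. Given $\mathcal M_{k-1}$, $\mathcal M_k$ consists of all marked trees obtained from some element of $\mathcal M_{k-1}$ by exactly one of: (i) adding a new vertex $u$ with $\mu(u)=1$ as a neighbor of the root; (ii) choosing a $1$-marked neighbor $u$ of the root, making $u$ the new root with $\mu(u)=0$, and attaching a new $1$-marked leaf to $u$. Duplicates are included only once. *)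

(* Defs.v *)
From mathcomp Require Import all_boot.
From Stdlib Require Lists.List.
Set Implicit Arguments. Unset Strict Implicit. Unset Printing Implicit Defensive.

(* A rooted marked tree: a node carrying its mark (true = 1, false = 0)
   and the (ordered) list of its children.  The neighbours of the root are
   exactly its children.  Order of children is irrelevant: trees are
   compared up to isomorphism of rooted marked trees, [iso] below. *)
Inductive mtree : Type := Node : bool -> seq mtree -> mtree.

Definition mark (t : mtree) : bool := let: Node b _ := t in b.
Definition children (t : mtree) : seq mtree := let: Node _ cs := t in cs.

Inductive iso : mtree -> mtree -> Prop :=
  | iso_node b cs ds : iso_list cs ds -> iso (Node b cs) (Node b ds)
with iso_list : seq mtree -> seq mtree -> Prop :=
  | iso_nil : iso_list [::] [::]
  | iso_cons c cs d ds1 ds2 :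
      iso c d -> iso_list cs (ds1 ++ ds2) -> iso_list (c :: cs) (ds1 ++ d :: ds2).

Definition T1 : mtree := Node false [:: Node true [::]].

Inductive step : mtree -> mtree -> Prop :=
  | step_add m cs : step (Node m cs) (Node m (Node true [::] :: cs))
  (* (ii) a 1-marked neighbour u = Node true ds of the root becomes the new
     root, marked 0; its neighbours are its old children ds, the old root
     (with its remaining children), and a new 1-marked leaf. *)
  | step_reroot m cs1 ds cs2 :
      step (Node m (cs1 ++ Node true ds :: cs2))
           (Node false (Node true [::] :: Node m (cs1 ++ cs2) :: ds)).

Definition obtained_from (s t : mtree) : Prop :=
  exists s', step s s' /\ iso t s'.

Fixpoint inM (k : nat) (t : mtree) : Prop :=
  match k with
  | 0 => False
  | k'.+1 =>
      match k' with
      | 0 => iso t T1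
      | _ => exists s, inM k' s /\ obtained_from s t
      end
  end.

Inductive subtree (s : mtree) : mtree -> Prop :=
  | st_refl : subtree s s
  | st_child t c : List.In c (children t) -> subtree s c -> subtree s t.

Definition nonroot_vertex (s t : mtree) : Prop :=
  exists c, List.In c (children t) /\ subtree s c.

(* Leaves (vertices of degree 1).  The root has degree = #children;
   a non-root vertex has degree = 1 + #children. *)
Definition root_is_leaf (t : mtree) : Prop := size (children t) = 1.
Definition nonroot_is_leaf (s : mtree) : Prop := children s = [::].

(* Main.v *)
Require Import Defs.
From HB Require Import structures.
From mathcomp Require Import all_boot.
From Stdlib Require List.
From mathcomp Require Import zify.
From Stdlib Require Import Lia.
Set Implicit Arguments. Unset Strict Implicit.

Fixpoint mtree_ind2 (P : mtree -> Prop)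
  (H : forall b cs, (forall c, List.In c cs -> P c) -> P (Node b cs)) t : P t :=
  match t with Node b cs => H b cs
    ((fix F (l : seq mtree) : forall c, List.In c l -> P c :=
      match l with
      | [::] => fun c (hc : List.In c [::]) => False_ind _ hc
      | x :: l' => fun c hc => match hc with
          | or_introl e => eq_ind x P (mtree_ind2 H x) c e
          | or_intror h => F l' c h end
      end) cs) end.

Fixpoint enc (t : mtree) : GenTree.tree nat :=
  let: Node b cs := t in GenTree.Node (nat_of_bool b) (map enc cs).
Fixpoint dec (x : GenTree.tree nat) : option mtree :=
  match x with GenTree.Leaf _ => None
  | GenTree.Node n xs => Some (Node (n != 0) (pmap dec xs)) end.
Lemma encK : pcancel enc dec.
Proof.
elim/mtree_ind2 => b cs IH /=; congr (Some (Node _ _)); first by case: b.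
elim: cs IH => //= c cs IHc IH; rewrite IH /=; last by left.
by rewrite IHc // => c' h; apply: IH; right.
Qed.
HB.instance Definition _ := Countable.copy mtree (pcan_type encK).

Definition le (s t : mtree) := pickle s <= pickle t.
Lemma le_total : total le. Proof. by move=> x y; rewrite /le leq_total. Qed.
Lemma le_trans' : transitive le. Proof. by move=> x y z; apply: leq_trans. Qed.
Lemma le_anti : antisymmetric le.
Proof. move=> x y /anti_leq h; exact: (pcan_inj pickleK h). Qed.

Fixpoint canon (t : mtree) : mtree :=
  let: Node b cs := t in Node b (sort le (map canon cs)).

Lemma canon_node b cs b' ds :
  canon (Node b cs) = canon (Node b' ds) <->
  b = b' /\ perm_eq (map canon cs) (map canon ds).
Proof.
split => /=.
  by case=> -> /(perm_sortP le_total le_trans' le_anti).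
by case=> -> /(perm_sortP le_total le_trans' le_anti) ->.
Qed.

Scheme iso_mind := Induction for iso Sort Prop
with iso_list_mind := Induction for iso_list Sort Prop.

Lemma perm_mid (x : mtree) s s1 s2 :
  perm_eq (x :: s) (s1 ++ x :: s2) = perm_eq s (s1 ++ s2).
Proof. by rewrite perm_sym -[x :: s2]/([:: x] ++ s2) perm_catCA /= perm_cons perm_sym. Qed.

Lemma iso_canon s t : iso s t -> canon s = canon t.
Proof.
move=> H.
apply: (@iso_mind (fun s t _ => canon s = canon t)
   (fun cs ds _ => perm_eq (map canon cs) (map canon ds))) H.
- by move=> b cs ds _ h; apply/canon_node.
- exact: perm_refl.
- move=> c cs d ds1 ds2 _ e _ h /=.
  by rewrite map_cat /= e perm_mid -map_cat.
Qed.

Lemma canon_iso s t : canon s = canon t -> iso s t.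
Proof.
elim/mtree_ind2: s t => b cs IH [b' ds] /canon_node [<-] P; constructor.
elim: cs ds IH P => [|c cs IHc] ds IH P.
  by case: ds P => [_|d ds /perm_size //]; exact: iso_nil.
have : canon c \in map canon ds by rewrite -(perm_mem P) mem_head.
case/mapP => d dds ecd.
case/splitPr: dds P => p1 p2.
rewrite map_cat /= -ecd perm_mid -map_cat => P.
apply: iso_cons; first by apply: IH; [left|].
by apply: IHc => // c' h; apply: IH; right.
Qed.

Lemma iso_iff s t : iso s t <-> canon s = canon t.
Proof. by split; [apply: iso_canon | apply: canon_iso]. Qed.

Definition leaf := Node true [::].
Fixpoint sp (l : seq nat) : mtree :=
  match l with
  | [::] => Node false [::]
  | a :: r => Node false (nseq a leaf ++ match r with [::] => [::] | _ => [:: sp r] end)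
  end.
Definition X r := if r is [::] then [::] else [:: sp r].
Lemma sp_cons a r : sp (a :: r) = Node false (nseq a leaf ++ X r).
Proof. by case: r. Qed.

Lemma canon_leaf : canon leaf = leaf. Proof. by []. Qed.
Lemma mark_canon t : mark (canon t) = mark t. Proof. by case: t. Qed.
Lemma mark_sp l : mark (sp l) = false. Proof. by case: l. Qed.

Lemma map_canon_sp a r :
  map canon (nseq a leaf ++ X r) = nseq a leaf ++ map canon (X r).
Proof. by rewrite map_cat map_nseq canon_leaf. Qed.

Lemma count_X r : count (pred1 leaf) (map canon (X r)) = 0.
Proof.
by case: r => //= a r; rewrite addn0; apply/eqP; rewrite eqb0.
Qed.

Lemma sp_inj l1 l2 : l1 != [::] -> l2 != [::] ->
  canon (sp l1) = canon (sp l2) -> l1 = l2.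
Proof.
elim: l1 l2 => // a r IH [//|a' r'] _ _.
rewrite !sp_cons => /canon_node [_]; rewrite !map_canon_sp => P.
have ea : a = a'.
  move/permP: P => /(_ (pred1 leaf)).
  by rewrite !count_cat !count_nseq !count_X /= !mul1n !addn0.
subst a'; move: P; rewrite perm_cat2l.
case: r IH => [|b r] IH; case: r' => [|b' r'] //= P.
- by have := perm_size P.
- by have := perm_size P.
have : canon (sp (b :: r)) \in [:: canon (sp (b' :: r'))] by rewrite -(perm_mem P) mem_head.
by rewrite inE => /eqP /IH ->.
Qed.

Definition allleaf t := forall s, subtree s t -> mark s -> children s = [::].

Lemma iso_list_in cs ds c : iso_list cs ds -> List.In c cs ->
  exists d, List.In d ds /\ iso c d.
Proof.
elim => //= c0 cs0 d ds1 ds2 icd _ IH [<-|h].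
  by exists d; split => //; apply: List.in_or_app; right; left.
case: (IH h) => d' [hd' id']; exists d'; split => //.
case: (List.in_app_or _ _ _ hd') => hh; apply: List.in_or_app; [by left|by right; right].
Qed.

Lemma subtree_iso s t : subtree s t -> forall t', iso t t' ->
  exists s', subtree s' t' /\ iso s s'.
Proof.
elim => [|t0 c hin _ IH] t' it.
  by exists t'; split => //; constructor.
case: it hin => b cs ds il /= hin.
case: (iso_list_in il hin) => d [hd id].
case: (IH d id) => s' [ss' is']; exists s'; split => //.
exact: (@st_child s' (Node b ds) d hd ss').
Qed.

Lemma iso_list_nil cs ds : iso_list cs ds -> ds = [::] -> cs = [::].
Proof. by case => // c cs0 d ds1 ds2 _ _; case: ds1. Qed.

Lemma allleaf_iso t t' : iso t t' -> allleaf t' -> allleaf t.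
Proof.
move=> it H s st ms.
case: (subtree_iso st it) => s' [st' is'].
case: is' ms st' => b cs ds il /= ms st'.
have := H _ st' ms => /= e; subst ds.
exact: (iso_list_nil il).
Qed.

Lemma subtree_inv s t : subtree s t ->
  s = t \/ exists c, List.In c (children t) /\ subtree s c.
Proof. by case=> [|t0 c h hs]; [left|right; exists c]. Qed.

Lemma in_nseq c a (x : mtree) : List.In c (nseq a x) -> c = x.
Proof. by elim: a => //= a IH [<-|/IH]. Qed.

Lemma allleaf_sp l : allleaf (sp l).
Proof.
elim: l => [|a r IH] s st.
  by case/subtree_inv: st => [-> //|[c [[] _]]].
move: st; rewrite sp_cons => /subtree_inv [-> //|[c [hin hs]]].
rewrite /= in hin.
case: (List.in_app_or _ _ _ hin) => [/in_nseq ec|].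
  by subst c; case/subtree_inv: hs => [-> //|[c [[] _]]].
case: r IH hin => [|b r] IH hin //= [ec|[]].
by subst c; apply: IH.
Qed.

Lemma step_sp s s' a r : canon s = canon (sp (a :: r)) -> step s s' ->
  canon s' = canon (sp (a.+1 :: r)) \/
  (0 < a /\ canon s' = canon (sp (1 :: a.-1 :: r))).
Proof.
move=> e st; case: st e => [m cs | m cs1 ds cs2] e.
- left; move: e; rewrite !sp_cons => /canon_node [-> P].
  by apply/canon_node; split => //; rewrite /= perm_cons.
- right; move: e; rewrite sp_cons => /canon_node [-> P].
  have hm : canon (Node true ds) \in map canon (nseq a leaf ++ X r).
    by rewrite -(perm_mem P) map_cat mem_cat /= inE eqxx orbT.
  rewrite map_canon_sp mem_cat mem_nseq in hm.
  have [a0 e] : 0 < a /\ canon (Node true ds) = leaf.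
    case/orP: hm => [/andP [a0 /eqP e] //| hx].
    move: hx; rewrite /X; case: (r) => [|b r'] //=.
  clear hm; have eds : ds = [::].
    move/(congr1 (size \o children)): e => /=; rewrite size_sort size_map.
    exact: size0nil.
  subst ds; split => //; clear e.
  case: a a0 P => // a' _ P.
  have E : canon (Node false (cs1 ++ cs2)) = canon (sp (a' :: r)).
    rewrite sp_cons; apply/canon_node; split => //.
    move: P; rewrite map_canon_sp map_cat /= perm_sym.
    rewrite -[Node true (sort le [::])]/leaf perm_mid perm_sym map_cat.
    by rewrite map_canon_sp.
  rewrite sp_cons; apply/canon_node; split => //.
  have -> : nseq 1 leaf ++ X (a' :: r) = [:: leaf; sp (a' :: r)] by [].
  rewrite -[map canon [:: leaf; Node false (cs1 ++ cs2)]]/[:: canon leaf; canon (Node false (cs1 ++ cs2))] E.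
  exact: perm_refl.
Qed.

Definition weight (l : seq nat) := sumn l + (size l).-1.
Definition valid (l : seq nat) := 0 < head 0 l.
Definition incr (l : seq nat) := if l is a :: r then a.+1 :: r else l.
Definition shift (l : seq nat) := if l is a :: r then 1 :: a.-1 :: r else l.
Definition op (b : bool) l := if b then incr l else shift l.

Lemma valid_nil l : valid l -> l != [::]. Proof. by case: l. Qed.

Lemma op_ok b l : valid l -> valid (op b l) /\ weight (op b l) = (weight l).+1.
Proof.
case: l => [//|a r]; case: a => [//|a] _; case: b; split => //;
rewrite /weight /=; lia.
Qed.

Lemma op_inj b1 b2 l1 l2 : valid l1 -> valid l2 -> op b1 l1 = op b2 l2 ->
  b1 = b2 /\ l1 = l2.
Proof.
case: l1 => [//|a r]; case: l2 => [//|a' r'].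
case: a => [//|a] _; case: a' => [//|a'] _.
by case: b1; case: b2 => //= -[] -> ->.
Qed.

Lemma step_sp' s s' l : canon s = canon (sp l) -> valid l -> step s s' ->
  exists b, canon s' = canon (sp (op b l)).
Proof.
case: l => [//|a r] e _ st.
case: (step_sp e st) => [e'|[_ e']]; [by exists true | by exists false].
Qed.

Lemma claimM k t : inM k.+1 t <->
  exists l, valid l /\ weight l = k.+1 /\ canon t = canon (sp l).
Proof.
elim: k t => [|k IH] t.
  rewrite /=; split.
    by move/iso_canon => e; exists [:: 1].
  case=> l [va [w e]]; apply/canon_iso; rewrite e.
  case: l va w {e} => [|a [|b r]] //= va w.
    by have -> : a = 1 by rewrite /weight /= in w; lia.
  by rewrite /valid /weight /= in va w; lia.
change ((exists s, inM k.+1 s /\ obtained_from s t) <->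
  exists l, valid l /\ weight l = k.+2 /\ canon t = canon (sp l)).
split.
  case=> s [/IH [l [va [w e]]] [s' [st its]]].
  case: (step_sp' e va st) => b e'.
  have [v' w'] := op_ok b va.
  exists (op b l); split => //; split; first by rewrite w' w.
  by rewrite (iso_canon its).
case=> l [va [w e]].
case: l va w e => [//|a r] va w e.
case: a va w e => [//|a] _ w e.
case: a w e => [|a] w e.
  case: r w e => [|b r] w e; first by rewrite /weight /= in w; lia.
  exists (sp (b.+1 :: r)); split.
    apply/IH; exists (b.+1 :: r); split => //; split => //.
    by rewrite /weight /= in w *; lia.
  exists (sp (1 :: b :: r)); split; last exact: canon_iso.
  rewrite sp_cons [sp (1 :: _)]sp_cons.
  have -> : X (b :: r) = [:: Node false (nseq b leaf ++ X r)] by rewrite /X sp_cons.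
  exact: (step_reroot false [::] [::] (nseq b leaf ++ X r)).
exists (sp (a.+1 :: r)); split.
  apply/IH; exists (a.+1 :: r); split => //; split => //.
  by rewrite /weight /= in w *; lia.
exists (sp (a.+2 :: r)); split; last exact: canon_iso.
by rewrite !sp_cons; exact: step_add.
Qed.

Fixpoint g n i := if n is n'.+1 then
  (if i < 2 ^ n' then incr (g n' i) else shift (g n' (i - 2 ^ n'))) else [:: 1].

Lemma g_ok n i : valid (g n i) /\ weight (g n i) = n.+1.
Proof.
elim: n i => [|n IH] i; first by [].
rewrite /=; case: ifP => _.
  case: (IH i) => v w; have := op_ok true v => /= [[-> ->]]; by rewrite w.
case: (IH (i - 2 ^ n)) => v w; have := op_ok false v => /= [[-> ->]]; by rewrite w.
Qed.

Lemma g_inj n i j : i < 2 ^ n -> j < 2 ^ n -> g n i = g n j -> i = j.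
Proof.
elim: n i j => [|n IH] i j /=.
  by rewrite expn0; lia.
rewrite expnS => hi hj.
have [vi _] := g_ok n i; have [vj _] := g_ok n j.
have [vi' _] := g_ok n (i - 2 ^ n); have [vj' _] := g_ok n (j - 2 ^ n).
case: ifP => hi'; case: ifP => hj' E.
- by case: (op_inj vi vj (E : op true _ = op true _)) => _ /IH ->.
- by case: (op_inj vi vj' (E : op true _ = op false _)).
- by case: (op_inj vi' vj (E : op false _ = op true _)).
- case: (op_inj vi' vj' (E : op false _ = op false _)) => _ /IH.
  have : 0 < 2 ^ n by rewrite expn_gt0.
  move: hi' hj' => /negbT; rewrite -leqNgt => hi' /negbT; rewrite -leqNgt => hj' ? H.
  have := H ltac:(lia) ltac:(lia); lia.
Qed.

Lemma g_surj n l : valid l -> weight l = n.+1 -> exists2 i, i < 2 ^ n & g n i = l.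
Proof.
elim: n l => [|n IH] [|a r] // va w; rewrite /valid /= in va.
  case: r w => [|b r] w; last by rewrite /weight /= in w; lia.
  by exists 0 => //; have -> : a = 1 by rewrite /weight /= in w; lia.
have p0 : 0 < 2 ^ n by rewrite expn_gt0.
case: a va w => [//|a] _ w.
case: a w => [|a] w.
  case: r w => [|b r] w; first by rewrite /weight /= in w; lia.
  case: (IH (b.+1 :: r)) => //; first by rewrite /weight /= in w *; lia.
  move=> i hi gi; exists (i + 2 ^ n); first by rewrite expnS; lia.
  rewrite /= ifF; last by apply/negbTE; rewrite -leqNgt leq_addl.
  by rewrite addnK gi.
case: (IH (a.+1 :: r)) => //; first by rewrite /weight /= in w *; lia.
move=> i hi gi; exists i; first by rewrite expnS; lia.
by rewrite /= hi gi.
Qed.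

Lemma has_canon_children b L : has mark (children (canon (Node b L))) = has mark L.
Proof.
rewrite /= (perm_has _ (permEl (perm_sort le _))) has_map.
by apply: eq_has => c /=; rewrite /preim /= mark_canon.
Qed.

Theorem lemma8p2 (k : nat) (hk : 1 <= k) :
  (forall t, inM k t -> has mark (children t)) /\
  (forall t, inM k t ->
     (mark t -> root_is_leaf t) /\
     (forall s, nonroot_vertex s t -> mark s -> nonroot_is_leaf s)) /\
  (2 <= k -> forall t, inM k t ->
     (exists s, inM k.-1 s /\ obtained_from s t) /\
     (forall s1 s2, inM k.-1 s1 -> inM k.-1 s2 ->
        obtained_from s1 t -> obtained_from s2 t -> iso s1 s2)) /\
  (exists f : 'I_(2 ^ k.-1) -> mtree,
     (forall i, inM k (f i)) /\
     (forall i j, iso (f i) (f j) -> i = j) /\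
     (forall t, inM k t -> exists i, iso t (f i))).
Proof.
case: k hk => // n _.
split; [|split; [|split]].
- move=> t /claimM [[|a r] [va [w e]]] //.
  case: t e => b cs e.
  rewrite -(has_canon_children b) e sp_cons has_canon_children has_cat.
  by case: a va {w e}.
- move=> t /claimM [l [va [w e]]]; split.
    by move=> mt; move: mt; rewrite -mark_canon e mark_canon mark_sp.
  move=> s [c [hc sc]] ms.
  have al : allleaf t := allleaf_iso (canon_iso e) (@allleaf_sp l).
  exact: (al s (@st_child s t c hc sc) ms).
- move=> h2 t ht; case: n h2 ht => // n _ ht; split; first exact: ht.
  move=> s1 s2 /claimM [l1 [v1 [w1 e1]]] /claimM [l2 [v2 [w2 e2]]]
    [s1' [st1 i1]] [s2' [st2 i2]].
  case: (step_sp' e1 v1 st1) => b1 e1'.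
  case: (step_sp' e2 v2 st2) => b2 e2'.
  have E : canon (sp (op b1 l1)) = canon (sp (op b2 l2)).
    by rewrite -e1' -e2' -(iso_canon i1) (iso_canon i2).
  have [v1' _] := op_ok b1 v1; have [v2' _] := op_ok b2 v2.
  move/(sp_inj (valid_nil v1') (valid_nil v2')): E => E.
  case: (op_inj v1 v2 E) => _ el.
  by apply/canon_iso; rewrite e1 e2 el.
- exists (fun i : 'I_(2 ^ n) => sp (g n i)); split; [|split].
  + move=> i; apply/claimM; exists (g n i); have [v w] := g_ok n i; by [].
  + move=> i j /iso_canon E; apply: val_inj; apply: (@g_inj n); [exact: ltn_ord|exact: ltn_ord|].
    have [vi _] := g_ok n i; have [vj _] := g_ok n j.
    exact: (sp_inj (valid_nil vi) (valid_nil vj) E).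
  + move=> t /claimM [l [v [w e]]]; case: (g_surj v w) => i hi gi.
    by exists (Ordinal hi); apply/canon_iso; rewrite e /= gi.
Qed.
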